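(* Let $\{W_i\}_{i=1}^M$ be subspaces of $\mathbb{R}^N$ such that $\sum_{i=1}^M\dim(W_i)=N$. Then $\{W_i\}_{i=1}^M$ does norm retrieval if and only if the subspaces $W_i$ are pairwise orthogonal.
   Context: A family of subspaces $\{W_i\}_{i=1}^M$ of $\mathbb{R}^N$ with orthogonal projections $\{P_i\}_{i=1}^M$ does norm retrieval if for all $x,y\in\mathbb{R}^N$, $\|P_ix\|=\|P_iy\|$ for all $i$ implies $\|x\|=\|y\|$. *)

(* Defs.v *)
(* Vectors of R^N are row vectors 'rV[R]_N, R : realType.
   A subspace of R^N is represented (as in mxalgebra) by a matrix whose row
   space is the subspace; u \in W is (u <= W)%MS. *)
From HB Require Import structures.
From mathcomp Require Import all_boot all_order all_algebra.
From mathcomp Require Import reals.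
Set Implicit Arguments. Unset Strict Implicit. Unset Printing Implicit Defensive.
Import Order.TTheory GRing.Theory Num.Theory.
Local Open Scope ring_scope.

Definition dotv (R : realType) (N : nat) (u v : 'rV[R]_N) : R :=
  (u *m v^T) 0 0.
Definition normv (R : realType) (N : nat) (u : 'rV[R]_N) : R :=
  Num.sqrt (dotv u u).

Definition is_orth_proj (R : realType) (N : nat) (W P : 'M[R]_N) : Prop :=
  forall x : 'rV[R]_N,
    (x *m P <= W)%MS /\
    (forall w : 'rV[R]_N, (w <= W)%MS -> dotv (x - x *m P) w = 0).

Definition norm_retrieval (R : realType) (N M : nat) (W : 'I_M -> 'M[R]_N)
  : Prop :=
  forall P : 'I_M -> 'M[R]_N, (forall i, is_orth_proj (W i) (P i)) ->
  forall x y : 'rV[R]_N,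
    (forall i, normv (x *m P i) = normv (y *m P i)) -> normv x = normv y.

Definition subspaces_pairwise_orthogonal (R : realType) (N M : nat)
  (W : 'I_M -> 'M[R]_N) : Prop :=
  forall i j : 'I_M, i != j ->
  forall u v : 'rV[R]_N, (u <= W i)%MS -> (v <= W j)%MS -> dotv u v = 0.

(* Main.v *)
Require Import Defs.
From HB Require Import structures.
From mathcomp Require Import all_boot all_order all_algebra.
From mathcomp Require Import reals.
From mathcomp Require Import ring zify.
Import Order.TTheory GRing.Theory Num.Theory.
Local Open Scope ring_scope.
Set Implicit Arguments. Unset Strict Implicit.

Section L.
Variables (R : realType) (N : nat).
Implicit Types (u v w x y : 'rV[R]_N).

Definition perp m (V : 'M[R]_(m, N)) : 'M[R]_N := kermx V^T.

Lemma dotE u v : dotv u v = \sum_j u 0 j * v 0 j.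
Proof. by rewrite /dotv mxE; apply: eq_bigr => j _; rewrite mxE. Qed.

Lemma dotC u v : dotv u v = dotv v u.
Proof. by rewrite !dotE; apply: eq_bigr => j _; rewrite mulrC. Qed.

Lemma dot_ge0 u : 0 <= dotv u u.
Proof. by rewrite dotE; apply: sumr_ge0 => j _; rewrite -expr2 sqr_ge0. Qed.

Lemma mxtr_eq0 m (A : 'M[R]_(m, N)) : A *m A^T = 0 -> A = 0.
Proof.
move=> h; apply/matrixP => i j; rewrite mxE.
have /matrixP /(_ i i) := h; rewrite !mxE => h2.
have h3 := psumr_eq0P _ h2.
have /eqP := h3 (fun k _ => ltac:(by rewrite mxE -expr2 sqr_ge0)) j isT.
by rewrite mxE mulf_eq0 orbb => /eqP.
Qed.

Lemma dot_self0 u : dotv u u = 0 -> u = 0.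
Proof.
move=> h; apply: mxtr_eq0; apply/matrixP => i k.
by rewrite /dotv in h; rewrite !ord1 h mxE.
Qed.

Lemma perpE m p (U : 'M[R]_(m, N)) (V : 'M[R]_(p, N)) : (U <= perp V)%MS = (U *m V^T == 0).
Proof. exact: sub_kermx. Qed.

Lemma perp_sym m p (U : 'M[R]_(m, N)) (V : 'M[R]_(p, N)) : (U <= perp V)%MS = (V <= perp U)%MS.
Proof.
rewrite !perpE; apply/eqP/eqP => h.
  by rewrite -[V]trmxK -trmx_mul h trmx0.
by rewrite -[U]trmxK -trmx_mul h trmx0.
Qed.

Lemma perp_self m (U : 'M[R]_(m, N)) : (U <= perp U)%MS -> U = 0.
Proof. by rewrite perpE => /eqP; apply: mxtr_eq0. Qed.

Lemma dot_perp u v (V : 'M[R]_N) : (u <= perp V)%MS -> (v <= V)%MS -> dotv u v = 0.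
Proof.
rewrite perpE => /eqP h /submxP [a ->].
by rewrite /dotv trmx_mul mulmxA h mul0mx mxE.
Qed.

Lemma perp_dot u (V : 'M[R]_N) : (forall v, (v <= V)%MS -> dotv u v = 0) -> (u <= perp V)%MS.
Proof.
move=> h; rewrite perpE; apply/eqP/matrixP => i k.
rewrite !ord1 [RHS]mxE -(h (row k V)) ?row_sub //.
by rewrite /dotv !mxE; apply: eq_bigr => l _; rewrite !mxE.
Qed.

Lemma rank_perp (V : 'M[R]_N) : \rank (perp V) = (N - \rank V)%N.
Proof. by rewrite mxrank_ker mxrank_tr. Qed.

Lemma perpS m p q (U : 'M[R]_(m,N)) (V : 'M[R]_(p,N)) (V' : 'M[R]_(q,N)) : (U <= perp V')%MS -> (V <= V')%MS -> (U <= perp V)%MS.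
Proof.
rewrite !perpE => /eqP h /submxP [a ->].
by rewrite trmx_mul mulmxA h mul0mx.
Qed.

End L.
Section L2.
Variables (R : realType) (N M : nat).
Implicit Types (u v w x y : 'rV[R]_N).

Lemma orth_rank (F : 'I_M -> 'M[R]_N) :
  (forall i j, i != j -> (F i <= perp (F j))%MS) ->
  \rank (\sum_i F i)%MS = (\sum_i \rank (F i))%N.
Proof.
move=> hF; apply/eqnP.
apply/mxdirect_sumsP => i _.
set Z := (_ :&: _)%MS.
have Z1 : (Z <= F i)%MS by apply: capmxSl.
have Z2 : (Z <= perp (F i))%MS.
  apply: submx_trans (capmxSr _ _) _.
  by apply/sumsmx_subP => j /= ji; rewrite hF // eq_sym.
apply: perp_self; apply: submx_trans Z1 _; by rewrite perp_sym.
Qed.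
End L2.
Section L3.
Variables (R : realType) (N : nat).
Implicit Types (u v w x y : 'rV[R]_N).

Lemma proj_sub (W P : 'M[R]_N) x : is_orth_proj W P -> (x *m P <= W)%MS.
Proof. by move=> h; case: (h x). Qed.

Lemma proj_compl (W P : 'M[R]_N) x : is_orth_proj W P -> (x - x *m P <= perp W)%MS.
Proof. by move=> h; case: (h x) => _ h2; apply: perp_dot. Qed.

Lemma proj0 (W P : 'M[R]_N) x : is_orth_proj W P -> (x <= perp W)%MS -> x *m P = 0.
Proof.
move=> h hx.
have h1 : (x *m P <= perp W)%MS.
  have -> : x *m P = x + - (x - x *m P) by rewrite opprB addrCA subrr addr0.
  by rewrite addmx_sub // eqmx_opp proj_compl.
apply: perp_self; apply: submx_trans (proj_sub x h) _.
by rewrite perp_sym.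
Qed.

Lemma full_sub (A : 'M[R]_N) x : \rank A = N -> (x <= A)%MS.
Proof.
move=> h; apply: submx_trans (submx1 x) _.
by rewrite sub1mx /row_full h.
Qed.

Lemma proj_exists (W : 'M[R]_N) : is_orth_proj W (proj_mx W (perp W)).
Proof.
have cap0 : (W :&: perp W)%MS = 0.
  apply: perp_self; apply: submx_trans (capmxSl _ _) _.
  by rewrite perp_sym capmxSr.
have rk : \rank (W + perp W)%MS = N.
  rewrite mxrank_disjoint_sum // rank_perp subnKC //.
  exact: rank_leq_col.
move=> x; split; first exact: proj_mx_sub.
move=> w hw; apply: (dot_perp _ hw).
by apply: proj_mx_compl_sub; apply: full_sub.
Qed.

Lemma dot_suml I (r : seq I) (P : pred I) (a : I -> 'rV[R]_N) v :
  dotv (\sum_(i <- r | P i) a i) v = \sum_(i <- r | P i) dotv (a i) v.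
Proof.
rewrite dotE; under eq_bigr => j _ do rewrite summxE mulr_suml.
rewrite exchange_big /=; apply: eq_bigr => i _; by rewrite dotE.
Qed.

Lemma dot_sumr I (r : seq I) (P : pred I) (a : I -> 'rV[R]_N) v :
  dotv v (\sum_(i <- r | P i) a i) = \sum_(i <- r | P i) dotv v (a i).
Proof.
rewrite dotC dot_suml; apply: eq_bigr => i _; exact: dotC.
Qed.

Lemma normv_sqr u : normv u ^+ 2 = dotv u u.
Proof. by rewrite /normv sqr_sqrtr // dot_ge0. Qed.

Lemma normv_eq u v : dotv u u = dotv v v -> normv u = normv v.
Proof. by rewrite /normv => ->. Qed.

Lemma normv_eqE u v : normv u = normv v -> dotv u u = dotv v v.
Proof. by move=> h; rewrite -!normv_sqr h. Qed.

Lemma normvN u : normv (- u) = normv u.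
Proof.
apply: normv_eq; rewrite !dotE; apply: eq_bigr => j _.
by rewrite !mxE mulrNN.
Qed.

Lemma dot_pm u v : dotv (u + v) (u + v) - dotv (u - v) (u - v) = 4%:R * dotv u v.
Proof.
rewrite !dotE -sumrB mulr_sumr; apply: eq_bigr => j _.
rewrite !mxE; ring.
Qed.

End L3.

Lemma rank_sum_le (R : realType) (N M : nat) (W : 'I_M -> 'M[R]_N) (i : 'I_M) :
  (\rank (\sum_(j | j != i) W j)%MS <= \sum_(j | j != i) \rank (W j))%N.
Proof. exact: (mxrank_sum_leqif _).1. Qed.

Theorem mainTheorem8 (R : realType) (N M : nat) (W : 'I_M -> 'M[R]_N) :
  (\sum_(i < M) \rank (W i))%N = N ->
  (norm_retrieval W <-> subspaces_pairwise_orthogonal W).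
Proof.
move=> hs; split.
- move=> NR.
  have [P hP] : exists P : 'I_M -> 'M[R]_N, forall i, is_orth_proj (W i) (P i).
    by exists (fun i => proj_mx (W i) (perp (W i))) => i; apply: proj_exists.
  pose B i := perp (\sum_(j | j != i) W j)%MS.
  have hBW : forall i k, k != i -> (B i <= perp (W k))%MS.
    move=> i k ki; apply: (perpS (submx_refl _)).
    exact: (sumsmx_sup k).
  have hBP : forall (i k : 'I_M) (x : 'rV[R]_N), k != i -> (x <= B i)%MS -> x *m P k = 0.
    move=> i k x ki hx.
    apply: (proj0 (hP k) _).
    exact: submx_trans hx (hBW _ _ ki).
  have hBB : forall i j, i != j -> (B i <= perp (B j))%MS.
    move=> i j ij; apply/row_subP => r; apply: perp_dot => v hv.
    set xr := row r (B i).
    have hxr : (xr <= B i)%MS by apply: row_sub.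
    have := NR P hP (xr + v) (xr - v).
    have H : forall k, normv ((xr + v) *m P k) = normv ((xr - v) *m P k).
      move=> k; rewrite mulmxDl mulmxBl.
      have [ki|ki] := eqVneq k i.
        have kj : k != j by rewrite ki.
        by rewrite (hBP j k v kj hv) addr0 subr0.
      by rewrite (hBP i k xr ki hxr) add0r sub0r normvN.
    move=> /(_ H) /normv_eqE /eqP; rewrite -subr_eq0 dot_pm mulf_eq0.
    by rewrite pnatr_eq0 /= => /eqP.
  have hBrank : forall i, (\rank (W i) <= \rank (B i))%N.
    move=> i; rewrite rank_perp.
    have := rank_sum_le W i.
    have : (\rank (W i) + \sum_(j | j != i) \rank (W j))%N = N.
      rewrite -[RHS]hs. rewrite [RHS](bigD1 i) //.
    lia.
  have hBfull : \rank (\sum_i B i)%MS = N.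
    apply/eqP; rewrite eqn_leq rank_leq_col /=.
    rewrite orth_rank // -{1}hs; exact: leq_sum.
  have hWB : forall i, (W i <= B i)%MS.
    move=> i; apply/row_subP => r; set w := row r (W i).
    have hw : (w <= W i)%MS by apply: row_sub.
    have := full_sub w hBfull; rewrite (bigD1 i) //=.
    set C := (\sum_(k | k != i) B k)%MS.
    move=> /sub_addsmxP [u hu].
    have hc : u.2 *m C = 0.
      have CW : (C <= perp (W i))%MS.
        by rewrite /C; apply/sumsmx_subP => k ki; apply: hBW; rewrite eq_sym.
      have CB : (C <= perp (B i))%MS.
        by rewrite /C; apply/sumsmx_subP => k ki; apply: hBB.
      have h1 : (u.2 *m C <= perp C)%MS.
        have -> : u.2 *m C = w + - (u.1 *m B i) by rewrite hu addrC addKr.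
        apply: addmx_sub; first by rewrite perp_sym; apply: perpS CW hw.
        by rewrite eqmx_opp perp_sym; apply: perpS CB (submxMl _ _).
      apply: perp_self; apply: submx_trans (submxMl u.2 C) _.
      by rewrite perp_sym.
    by rewrite hu hc addr0 submxMl.
  move=> i j ij u v hu hv; apply: (dot_perp _ hv).
  apply: (perpS _ (hWB j)).
  apply: submx_trans hu _; apply: submx_trans (hWB i) _.
  exact: hBB.
- move=> ho.
  have horth : forall i j, i != j -> (W i <= perp (W j))%MS.
    move=> i j ij; apply/row_subP => r; apply: perp_dot => v hv.
    by apply: (ho i j ij) => //; apply: row_sub.
  have hfull : \rank (\sum_i W i)%MS = N by rewrite orth_rank.
  move=> P hP.
  have key : forall x, dotv x x = \sum_i normv (x *m P i) ^+ 2.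
    move=> x.
    pose d := x - \sum_k x *m P k.
    have hd : forall i, (d <= perp (W i))%MS.
      move=> i.
      have -> : d = (x - x *m P i) + - \sum_(k | k != i) x *m P k.
        by rewrite /d (bigD1 i) //= opprD addrA.
      rewrite addmx_sub // ?eqmx_opp; first exact: proj_compl.
      apply: summx_sub => k ki; apply: submx_trans (proj_sub _ (hP k)) _.
      exact: horth.
    have d0 : d = 0.
      apply: perp_self; apply: submx_trans (full_sub d hfull) _.
      by apply/sumsmx_subP => i _; rewrite perp_sym.
    have hx : x = \sum_k x *m P k by apply/eqP; rewrite -subr_eq0 -/d d0.
    transitivity (dotv (\sum_k x *m P k) (\sum_k x *m P k)); first by rewrite -hx.
    rewrite dot_suml; apply: eq_bigr => k _.
    rewrite dot_sumr (bigD1 k) //= big1 ?addr0 ?normv_sqr // => l lk.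
    apply: (dot_perp _ (proj_sub _ (hP l))).
    apply: submx_trans (proj_sub _ (hP k)) _; apply: horth.
    by rewrite eq_sym.
  move=> x y hxy; apply: normv_eq; rewrite !key.
  by apply: eq_bigr => i _; rewrite hxy.
Qed.
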